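(* Let $N=\{1,\dots,n\}$, $n\ge2$, be a parallel-link network with unit demand and affine latencies $\ell_i(x_i)=a_ix_i+b_i$, $a_i>0$, $b_i\ge0$, with $x_i(0)>0$ for all $i\in N$. For $c\in\mathbb{R}_+$ let $t(c)$ be the unique element of $\mathcal{T}(c)$, $x(c)=x(t(c))$, and $A(c)=\{i\in N: t_i(c)=c\}$. Then there exist an integer $1\le j\le n$, numbers $c_1>c_2>\dots>c_j>0$, and sets $\emptyset=A_0\subsetneq A_1\subsetneq\dots\subsetneq A_j=N$ such that, with $c_0=\infty$: $A(c)=A_k$ for all $c\in(c_{k+1},c_k]\cap\mathbb{R}_+$, $k=0,\dots,j-1$, and $A(c)=N$ for all $c\in[0,c_j]$. Moreover, on each of the intervals $[c_1,\infty)$, $[c_{k+1},c_k]$ ($k=1,\dots,j-1$) and $[0,c_j]$, the map $c\mapsto x(c)$ is affine and $c\mapsto C(x(c))$ is a polynomial of degree at most $2$ in $c$; on $[c_1,\infty)$ and on $[0,c_j]$ the flow $x(c)$ is constant (on $[0,c_j]$ it equals $x(0)$). In particular $\min_{c\in\mathbb{R}_+}C(x(c))$ is attained.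
   Context: Parallel links $N$, one unit of flow; flows $x\in\mathbb{R}^N_+$ with $\sum_ix_i=1$; total latency cost $C(x)=\sum_{i\in N}\ell_i(x_i)x_i$. For tolls $t\in\mathbb{R}^N_+$, $x(t)$ is the unique Wardrop equilibrium for $t$ (for all $i,j$ with $x_i>0$: $\ell_i(x_i)+t_i\le\ell_j(x_j)+t_j$); $x(0)$ is the untolled one. Profit $\Pi_i(t)=t_ix_i(t)$. $\mathcal{T}(c)$: toll vectors $t$ with $0\le t_i\le c$ for all $i$ such that for every $i$ and $t'_i\in[0,c]$, $\Pi_i(t_i,t_{-i})\ge\Pi_i(t'_i,t_{-i})$ (flow recomputed). Under the hypotheses, $\mathcal{T}(c)$ is a singleton for every $c\in\mathbb{R}_+$. *)

(* Defs.v *)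
(* classical reals. Links are indexed by 0..n-1 (i.e. N = {1..n}
   shifted); vectors over links are functions nat -> R, only indices i < n matter. *)
From Stdlib Require Import Reals.
Open Scope R_scope.

Definition lat (a b : nat -> R) (i : nat) (y : R) : R := a i * y + b i.

Fixpoint sumN (n : nat) (f : nat -> R) : R :=
  match n with O => 0 | S m => sumN m f + f m end.

Definition feasible (n : nat) (x : nat -> R) : Prop :=
  (forall i, (i < n)%nat -> 0 <= x i) /\ sumN n x = 1.

Definition wardrop (n : nat) (a b t x : nat -> R) : Prop :=
  feasible n x /\
  forall i j, (i < n)%nat -> (j < n)%nat -> 0 < x i ->
    lat a b i (x i) + t i <= lat a b j (x j) + t j.

Definition cost (n : nat) (a b x : nat -> R) : R :=
  sumN n (fun i => lat a b i (x i) * x i).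

Definition nonneg_tolls (n : nat) (t : nat -> R) : Prop :=
  forall i, (i < n)%nat -> 0 <= t i.

(* X is the map t |-> x(t): X t is (on the links) the unique Wardrop equilibrium *)
Definition is_eq_map (n : nat) (a b : nat -> R) (X : (nat -> R) -> (nat -> R)) : Prop :=
  forall t, nonneg_tolls n t ->
    forall y, wardrop n a b t y <-> (forall i, (i < n)%nat -> y i = X t i).

Definition upd (t : nat -> R) (i : nat) (s : R) : nat -> R :=
  fun k => if Nat.eqb k i then s else t k.

Definition profit (X : (nat -> R) -> (nat -> R)) (t : nat -> R) (i : nat) : R :=
  t i * X t i.

Definition inT (n : nat) (X : (nat -> R) -> (nat -> R)) (c : R) (t : nat -> R) : Prop :=
  (forall i, (i < n)%nat -> 0 <= t i <= c) /\
  forall i, (i < n)%nat -> forall s, 0 <= s <= c ->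
    profit X t i >= profit X (upd t i s) i.

(* Main.v *)
Require Import Defs.
From Stdlib Require Import Reals Lra Lia Psatz List.
Open Scope R_scope.

Lemma sumN_ext n f g : (forall k, (k < n)%nat -> f k = g k) -> sumN n f = sumN n g.
Proof. induction n; simpl; intros H; auto. rewrite IHn by (intros; apply H; lia). rewrite (H n) by lia. auto. Qed.

Lemma sumN_plus n f g : sumN n (fun k => f k + g k) = sumN n f + sumN n g.
Proof. induction n; simpl; [lra|]. rewrite IHn. lra. Qed.

Lemma sumN_scal n c f : sumN n (fun k => c * f k) = c * sumN n f.
Proof. induction n; simpl; [lra|]. rewrite IHn. lra. Qed.

Lemma sumN_zero n : sumN n (fun _ => 0) = 0.
Proof. induction n; simpl; [lra|]. rewrite IHn. lra. Qed.

Lemma sumN_le n f g : (forall k, (k < n)%nat -> f k <= g k) -> sumN n f <= sumN n g.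
Proof. induction n; simpl; intros H; [lra|]. assert (sumN n f <= sumN n g) by (apply IHn; intros; apply H; lia).
 specialize (H n ltac:(lia)). lra. Qed.

Lemma sumN_lt n f g i : (forall k, (k < n)%nat -> f k <= g k) -> (i < n)%nat -> f i < g i ->
  sumN n f < sumN n g.
Proof. induction n; simpl; intros H Hi Hfi; [lia|].
 destruct (Nat.eq_dec i n).
 - subst. assert (sumN n f <= sumN n g) by (apply sumN_le; intros; apply H; lia). lra.
 - assert (sumN n f < sumN n g) by (apply IHn; auto; try lia; intros; apply H; lia).
   specialize (H n ltac:(lia)). lra. Qed.

Lemma sumN_ind n i v : (i < n)%nat -> sumN n (fun k => if Nat.eqb k i then v else 0) = v.
Proof. induction n; simpl; intros Hi; [lia|].
 destruct (Nat.eq_dec i n).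
 - subst. rewrite Nat.eqb_refl. rewrite (sumN_ext _ _ (fun _ => 0)). rewrite sumN_zero; lra.
   intros k Hk. destruct (Nat.eqb_spec k n); [lia|auto].
 - rewrite IHn by lia. destruct (Nat.eqb_spec n i); [lia|lra]. Qed.

Lemma sumN_lb n f : (forall k, (k < n)%nat -> 0 < f k) -> exists m, 0 < m /\ forall k, (k < n)%nat -> m <= f k.
Proof. induction n; intros H.
 - exists 1. split; [lra| intros; lia].
 - destruct IHn as [m [Hm Hk]]; [intros; apply H; lia|].
   exists (Rmin m (f n)). split; [apply Rmin_glb_lt; [auto| apply H; lia]|].
   intros k Hk'. destruct (Nat.eq_dec k n). subst; apply Rmin_r.
   eapply Rle_trans. apply Rmin_l. apply Hk. lia. Qed.

Lemma sumN_pos_ex n f : 0 < sumN n f -> exists k, (k < n)%nat /\ 0 < f k.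
Proof. induction n; simpl; intros H; [lra|].
 destruct (Rlt_dec 0 (f n)). exists n; split; auto.
 destruct IHn as [k [Hk Hf]]. lra. exists k; split; auto. Qed.

Lemma sumN_pos n f : (0 < n)%nat -> (forall k, (k < n)%nat -> 0 < f k) -> 0 < sumN n f.
Proof. intros Hn H. rewrite <- (sumN_zero n). apply (sumN_lt n _ _ 0%nat); auto.
 intros; left; auto. Qed.

Lemma Rdiv_le_0_compat x y : 0 <= x -> 0 < y -> 0 <= x / y.
Proof. intros. unfold Rdiv. apply Rmult_le_pos; auto. left; apply Rinv_0_lt_compat; auto. Qed.

Lemma ward_level n a b tau y i j : wardrop n a b tau y -> (i < n)%nat -> (j < n)%nat -> 0 < y i -> 0 < y j ->
  lat a b i (y i) + tau i = lat a b j (y j) + tau j.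
Proof. intros [_ H] Hi Hj Hyi Hyj. pose proof (H i j Hi Hj Hyi). pose proof (H j i Hj Hi Hyj). lra. Qed.

Lemma eqmap_ward n a b X tau : is_eq_map n a b X -> nonneg_tolls n tau -> wardrop n a b tau (X tau).
Proof. intros HX Ht. apply (HX tau Ht (X tau)). auto. Qed.

Lemma eqmap_uniq n a b X tau y : is_eq_map n a b X -> nonneg_tolls n tau -> wardrop n a b tau y ->
  forall i, (i < n)%nat -> y i = X tau i.
Proof. intros HX Ht Hw. apply (HX tau Ht y). auto. Qed.

Lemma ward_ext n a b tau tau' y : (forall k, (k < n)%nat -> tau k = tau' k) -> wardrop n a b tau y -> wardrop n a b tau' y.
Proof. intros He [Hf H]. split; auto. intros i j Hi Hj Hy. rewrite <- !He by auto. auto. Qed.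

Lemma level_cmp n a b tau tau' y y' i j : (forall k, (k < n)%nat -> 0 < a k) ->
  wardrop n a b tau y -> wardrop n a b tau' y' -> (forall k, (k < n)%nat -> tau' k <= tau k) ->
  (i < n)%nat -> (j < n)%nat -> 0 < y i -> 0 < y' j ->
  lat a b j (y' j) + tau' j <= lat a b i (y i) + tau i.
Proof.
 intros Ha Hw Hw' Hle Hi Hj Hyi Hyj.
 destruct (Rle_lt_dec (lat a b j (y' j) + tau' j) (lat a b i (y i) + tau i)) as [|Hlt]; auto.
 exfalso.
 assert (Hs : forall k, (k < n)%nat -> 0 < y k -> y k < y' k).
 { intros k Hk Hyk. pose proof (ward_level _ _ _ _ _ _ _ Hw Hk Hi Hyk Hyi) as E1.
   pose proof (Ha k Hk). pose proof (Hle k Hk).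
   pose proof (proj1 (proj1 Hw')) as Hf'. pose proof (proj2 Hw') as Hw''.
   destruct (Rlt_dec 0 (y' k)) as [Hy'k|Hy'k].
   - pose proof (ward_level _ _ _ _ _ _ _ Hw' Hk Hj Hy'k Hyj) as E2.
     unfold lat in *. nra.
   - assert (y' k = 0) by (pose proof (Hf' k Hk); lra).
     pose proof (Hw'' j k Hj Hk Hyj). unfold lat in *. rewrite H1 in H2. nra. }
 destruct Hw as [[Hf Hs1] _]. destruct Hw' as [[Hf' Hs1'] _].
 assert (sumN n y < sumN n y').
 { apply (sumN_lt n _ _ i); auto. intros k Hk. destruct (Rlt_dec 0 (y k)).
   left; auto. pose proof (Hf' k Hk). lra. }
 lra.
Qed.

Definition Hyp n a b (X : (nat -> R) -> (nat -> R)) (t : R -> nat -> R) : Prop :=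
  (2 <= n)%nat /\ (forall i, (i < n)%nat -> 0 < a i) /\ (forall i, (i < n)%nat -> 0 <= b i) /\
  is_eq_map n a b X /\ (forall i, (i < n)%nat -> 0 < X (fun _ => 0) i) /\
  (forall c, 0 <= c -> forall s, inT n X c s <-> (forall i, (i < n)%nat -> s i = t c i)).

Definition Ssum n a := sumN n (fun k => 1 / a k).
Definition gg n a i := (1 / a i) * (1 - 1 / (a i * Ssum n a)).

Ltac dH H := destruct H as (Hn & Ha & Hb & HX & HX0 & Ht).

Lemma Ssum_gt n a b X t i : Hyp n a b X t -> (i < n)%nat -> 1 / a i < Ssum n a.
Proof. intros H Hi. dH H. unfold Ssum.
 rewrite <- (sumN_ind n i (1 / a i)) at 1 by auto.
 apply (sumN_lt n _ _ (if Nat.eqb i 0 then 1%nat else 0%nat)).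
 - intros k Hk. destruct (Nat.eqb_spec k i). subst; lra.
   pose proof (Ha k Hk). left. apply Rdiv_lt_0_compat; lra.
 - destruct (Nat.eqb_spec i 0); lia.
 - destruct (Nat.eqb_spec i 0) as [E|E].
   + destruct (Nat.eqb_spec 1 i); [lia|]. pose proof (Ha 1%nat ltac:(lia)). apply Rdiv_lt_0_compat; lra.
   + destruct (Nat.eqb_spec 0 i); [lia|]. pose proof (Ha 0%nat ltac:(lia)). apply Rdiv_lt_0_compat; lra.
Qed.

Lemma Ssum_pos n a b X t : Hyp n a b X t -> 0 < Ssum n a.
Proof. intros H. pose proof (Ssum_gt _ _ _ _ _ 0%nat H). dH H. pose proof (Ha 0%nat ltac:(lia)).
 assert (0 < 1 / a 0%nat) by (apply Rdiv_lt_0_compat; lra). specialize (H0 ltac:(lia)). lra. Qed.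

Lemma gg_pos n a b X t i : Hyp n a b X t -> (i < n)%nat -> 0 < gg n a i.
Proof. intros H Hi. pose proof (Ssum_gt _ _ _ _ _ i H Hi). dH H. pose proof (Ha i Hi).
 unfold gg. assert (0 < 1 / a i) by (apply Rdiv_lt_0_compat; lra).
 assert (0 < Ssum n a) by lra.
 apply Rmult_lt_0_compat. lra.
 assert (1 < a i * Ssum n a).
 { apply (Rmult_lt_compat_l (a i)) in H0; auto. replace (a i * (1 / a i)) with 1 in H0 by (field; lra). lra. }
 assert (1 / (a i * Ssum n a) < 1). { apply (Rmult_lt_reg_r (a i * Ssum n a)). lra.
   replace (1 / (a i * Ssum n a) * (a i * Ssum n a)) with 1 by (field; split; lra). lra. }
 lra. Qed.

Lemma tin n a b X t c : Hyp n a b X t -> 0 <= c -> inT n X c (t c).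
Proof. intros H Hc. dH H. apply (Ht c Hc). auto. Qed.

Lemma tnn n a b X t c : Hyp n a b X t -> 0 <= c -> nonneg_tolls n (t c).
Proof. intros H Hc i Hi. destruct (tin _ _ _ _ _ _ H Hc) as [Hb' _]. apply Hb'; auto. Qed.

Lemma tle n a b X t c : Hyp n a b X t -> 0 <= c -> forall i, (i < n)%nat -> 0 <= t c i <= c.
Proof. intros H Hc i Hi. destruct (tin _ _ _ _ _ _ H Hc) as [Hb' _]. apply Hb'; auto. Qed.

Lemma xward n a b X t c : Hyp n a b X t -> 0 <= c -> wardrop n a b (t c) (X (t c)).
Proof. intros H Hc. pose proof (tnn _ _ _ _ _ _ H Hc). dH H. apply eqmap_ward; auto. Qed.

Lemma X_t0 n a b X t : Hyp n a b X t -> forall i, (i < n)%nat -> X (t 0) i = X (fun _ => 0) i.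
Proof. intros H i Hi. pose proof (tle _ _ _ _ _ 0 H (Rle_refl 0)) as Hl.
 pose proof (tnn _ _ _ _ _ 0 H (Rle_refl 0)). dH H. symmetry.
 apply (eqmap_uniq n a b X); auto.
 apply (ward_ext n a b (fun _ => 0)). intros k Hk. specialize (Hl k Hk). lra.
 apply eqmap_ward; auto. intros k _; lra. Qed.

Lemma xpos n a b X t c : Hyp n a b X t -> 0 <= c -> forall i, (i < n)%nat -> 0 < X (t c) i.
Proof.
 intros H Hc i Hi.
 destruct (Rlt_dec 0 (X (t c) i)) as [|Hno]; auto. exfalso.
 pose proof (xward _ _ _ _ _ _ H Hc) as Hw.
 assert (Hx0 : X (t c) i = 0) by (pose proof (proj1 (proj1 Hw) i Hi); lra).
 destruct (Req_dec c 0) as [E|E].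
 - subst. rewrite (X_t0 _ _ _ _ _ H i Hi) in Hx0. dH H. specialize (HX0 i Hi). lra.
 - pose proof (tin _ _ _ _ _ _ H Hc) as [Hb' Hp]. pose proof H as H'. dH H.
   set (x0 := X (fun _ => 0)).
   pose proof (HX0 i Hi). pose proof (Ha i Hi).
   set (s := Rmin c (a i * x0 i / 2)).
   assert (Hs : 0 < s) by (apply Rmin_glb_lt; [lra| unfold x0 in *; nra]).
   assert (Hs2 : s <= a i * x0 i / 2) by apply Rmin_r.
   assert (Hs3 : s <= c) by apply Rmin_l.
   set (tau := upd (t c) i s).
   assert (Htn : nonneg_tolls n tau).
   { intros k Hk. unfold tau, upd. destruct (Nat.eqb k i). lra. apply (Hb' k Hk). }
   pose proof (eqmap_ward _ _ _ _ _ HX Htn) as Hwt.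
   specialize (Hp i Hi s ltac:(lra)). unfold profit in Hp. rewrite Hx0 in Hp.
   assert (Hti : tau i = s) by (unfold tau, upd; rewrite Nat.eqb_refl; auto).
   fold tau in Hp. rewrite Hti in Hp.
   assert (Hyi : X tau i = 0).
   { pose proof (proj1 (proj1 Hwt) i Hi). destruct H1; [|auto]. exfalso.
     assert (0 < s * X tau i) by (apply Rmult_lt_0_compat; auto). lra. }
   destruct (sumN_pos_ex n (X tau)) as [p [Hpn Hyp]]. rewrite (proj2 (proj1 Hwt)); lra.
   assert (Hw0 : wardrop n a b (fun _ => 0) x0) by (apply eqmap_ward; auto; intros k _; lra).
   pose proof (level_cmp n a b tau (fun _ => 0) (X tau) x0 p i Ha Hwt Hw0 Htn Hpn Hi Hyp) as L1.
   assert (0 < x0 i) by auto. specialize (L1 H1).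
   pose proof (proj2 Hwt p i Hpn Hi Hyp) as L2.
   rewrite Hyi, Hti in L2. unfold lat in *. nra.
Qed.

Definition Lc (n : nat) (a b : nat -> R) (X : (nat -> R) -> (nat -> R)) (t : R -> nat -> R) c := lat a b 0 (X (t c) 0%nat) + t c 0%nat.

Lemma lev n a b X t c : Hyp n a b X t -> 0 <= c -> forall i, (i < n)%nat ->
  lat a b i (X (t c) i) + t c i = Lc n a b X t c.
Proof. intros H Hc i Hi. unfold Lc. pose proof H as H'. dH H'.
 apply (ward_level n); auto. apply xward; auto. lia. apply (xpos n a b X t c H Hc); auto.
 apply (xpos n a b X t c H Hc); lia. Qed.

Lemma dev n a b X t c i : Hyp n a b X t -> 0 <= c -> (i < n)%nat -> forall h,
  0 <= t c i + h <= c ->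
  (forall k, (k < n)%nat -> 0 <= X (t c) k + h * (1 / (a i * Ssum n a)) / a k - (if Nat.eqb k i then h / a i else 0)) ->
  h * (X (t c) i - gg n a i * t c i - gg n a i * h) <= 0.
Proof.
 intros H Hc Hi h Hh Hy.
 pose proof (Ssum_pos _ _ _ _ _ H) as HS.
 pose proof (tin _ _ _ _ _ _ H Hc) as [Hb' Hp].
 pose proof (xward _ _ _ _ _ _ H Hc) as Hw.
 pose proof (lev _ _ _ _ _ _ H Hc) as Hlev.
 pose proof H as H'. dH H'.
 set (x := X (t c)) in *. set (tt := t c) in *. set (w := 1 / (a i * Ssum n a)) in *.
 set (y := fun k => x k + h * w / a k - (if Nat.eqb k i then h / a i else 0)).
 set (tau := upd tt i (tt i + h)).
 assert (Htn : nonneg_tolls n tau).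
 { intros k Hk. unfold tau, upd. destruct (Nat.eqb k i). lra. apply (Hb' k Hk). }
 assert (Hlv : forall k, (k < n)%nat -> lat a b k (y k) + tau k = Lc n a b X t c + h * w).
 { intros k Hk. rewrite <- (Hlev k Hk). pose proof (Ha k Hk). unfold y, tau, upd, lat.
   destruct (Nat.eqb_spec k i). subst k. field. lra. field. lra. }
 assert (Hwy : wardrop n a b tau y).
 { split; [split|].
   - intros k Hk. apply Hy; auto.
   - unfold y. rewrite (sumN_ext n _ (fun k => (x k + (h * w) * (1 / a k)) + (-1) * (if Nat.eqb k i then h / a i else 0))).
     2:{ intros k Hk. unfold Rdiv. ring. }
     rewrite !sumN_plus, !sumN_scal, sumN_ind by auto. fold (Ssum n a).
     rewrite (proj2 (proj1 Hw)). unfold w. pose proof (Ha i Hi). field. lra.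
   - intros k j Hk Hj _. rewrite !Hlv by auto. lra. }
 pose proof (eqmap_uniq _ _ _ _ _ _ HX Htn Hwy i Hi) as Hyi.
 specialize (Hp i Hi (tt i + h) Hh). unfold profit in Hp. fold tau in Hp.
 rewrite <- Hyi in Hp.
 assert (Hti : tau i = tt i + h) by (unfold tau, upd; rewrite Nat.eqb_refl; auto).
 rewrite Hti in Hp. unfold y in Hp. rewrite Nat.eqb_refl in Hp.
 assert (E : x i + h * w / a i - h / a i = x i - gg n a i * h).
 { unfold gg, w. pose proof (Ha i Hi). field. lra. }
 rewrite E in Hp.
 assert (E2: (tt i + h) * (x i - gg n a i * h) = tt i * x i + h * (x i - gg n a i * tt i - gg n a i * h)) by ring.
 change (X tt i) with (x i) in Hp. lra.
Qed.

Lemma foc_a n a b X t c i : Hyp n a b X t -> 0 <= c -> (i < n)%nat -> t c i < c ->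
  X (t c) i <= gg n a i * t c i.
Proof.
 intros H Hc Hi Hlt.
 pose proof (gg_pos _ _ _ _ _ _ H Hi) as Hg.
 pose proof (Ssum_pos _ _ _ _ _ H) as HS.
 pose proof (tle _ _ _ _ _ _ H Hc i Hi) as Hti.
 pose proof (xpos _ _ _ _ _ _ H Hc) as Hx.
 destruct (Rle_dec (X (t c) i) (gg n a i * t c i)) as [|Hno]; auto. exfalso.
 set (g := gg n a i) in *. set (x := X (t c)) in *.
 set (h := Rmin (c - t c i) ((x i - g * t c i) / (2 * g))).
 assert (h1 : 0 < h). { apply Rmin_glb_lt. lra. apply Rdiv_lt_0_compat; lra. }
 assert (h2 : h <= c - t c i) by apply Rmin_l.
 assert (h3 : g * h <= (x i - g * t c i) / 2).
 { assert (h <= (x i - g * t c i) / (2 * g)) by apply Rmin_r.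
   apply (Rmult_le_compat_l g) in H0; [|lra]. replace (g * ((x i - g * t c i) / (2 * g))) with ((x i - g * t c i) / 2) in H0 by (field; lra). lra. }
 assert (Hd := dev n a b X t c i H Hc Hi h ltac:(lra)).
 pose proof H as H'. dH H'.
 assert (E : x i + h * (1 / (a i * Ssum n a)) / a i - h / a i = x i - g * h).
 { unfold g, gg. pose proof (Ha i Hi). field. lra. }
 specialize (Hd ltac:(intros k Hk; destruct (Nat.eqb_spec k i);
   [subst k; fold x; rewrite E; nra|
    fold x; pose proof (Hx k Hk); pose proof (Ha k Hk);
    assert (0 <= h * (1 / (a i * Ssum n a)) / a k) by
      (apply Rdiv_le_0_compat; [apply Rmult_le_pos; [lra| left; apply Rdiv_lt_0_compat; [lra| pose proof (Ha i Hi); nra]]|lra]);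
    lra])).
 fold g x in Hd.
 assert (0 < h * (x i - g * t c i - g * h)) by (apply Rmult_lt_0_compat; lra). lra.
Qed.

Lemma foc_b n a b X t c i : Hyp n a b X t -> 0 <= c -> (i < n)%nat -> 0 < t c i ->
  gg n a i * t c i <= X (t c) i.
Proof.
 intros H Hc Hi Hpos.
 pose proof (gg_pos _ _ _ _ _ _ H Hi) as Hg.
 pose proof (Ssum_pos _ _ _ _ _ H) as HS.
 pose proof (tle _ _ _ _ _ _ H Hc i Hi) as Hti.
 pose proof (xpos _ _ _ _ _ _ H Hc) as Hx.
 destruct (Rle_dec (gg n a i * t c i) (X (t c) i)) as [|Hno]; auto. exfalso.
 pose proof H as H'. dH H'.
 destruct (sumN_lb n (fun k => X (t c) k * a k)) as [m [Hm Hmk]].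
 { intros k Hk. pose proof (Hx k Hk). pose proof (Ha k Hk). nra. }
 set (g := gg n a i) in *. set (x := X (t c)) in *.
 set (w := 1 / (a i * Ssum n a)).
 assert (Hw : 0 < w). { unfold w. apply Rdiv_lt_0_compat. lra. pose proof (Ha i Hi); nra. }
 set (r := Rmin (Rmin (t c i) ((g * t c i - x i) / (2 * g))) (m / w)).
 assert (r1 : 0 < r). { apply Rmin_glb_lt. apply Rmin_glb_lt. lra. apply Rdiv_lt_0_compat; lra. apply Rdiv_lt_0_compat; lra. }
 assert (r2 : r <= t c i) by (eapply Rle_trans; [apply Rmin_l| apply Rmin_l]).
 assert (r3 : g * r <= (g * t c i - x i) / 2).
 { assert (Hr : r <= (g * t c i - x i) / (2 * g)) by (eapply Rle_trans; [apply Rmin_l| apply Rmin_r]).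
   apply (Rmult_le_compat_l g) in Hr; [|lra]. replace (g * ((g * t c i - x i) / (2 * g))) with ((g * t c i - x i) / 2) in Hr by (field; lra). lra. }
 assert (r4 : r * w <= m).
 { assert (Hr : r <= m / w) by apply Rmin_r. apply (Rmult_le_compat_r w) in Hr; [|lra].
   replace (m / w * w) with m in Hr by (field; lra). lra. }
 assert (Hd := dev n a b X t c i H Hc Hi (- r) ltac:(lra)).
 assert (E : x i + (- r) * w / a i - (- r) / a i = x i + g * r).
 { unfold g, gg, w. pose proof (Ha i Hi). field. lra. }
 specialize (Hd ltac:(intros k Hk; destruct (Nat.eqb_spec k i);
   [subst k; fold x w; rewrite E; pose proof (Hx i Hi); nra|
    fold x w; pose proof (Hx k Hk); pose proof (Ha k Hk); pose proof (Hmk k Hk);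
    assert (EE : x k + - r * w / a k - 0 = (x k * a k - r * w) / a k) by (field; lra);
    rewrite EE; apply Rdiv_le_0_compat; lra])).
 fold g x in Hd.
 assert (0 < (- r) * (x i - g * t c i - g * (- r))).
 { replace ((- r) * (x i - g * t c i - g * (- r))) with (r * (g * t c i - x i - g * r)) by ring.
   apply Rmult_lt_0_compat; lra. }
 lra.
Qed.

Lemma foc n a b X t c i : Hyp n a b X t -> 0 <= c -> (i < n)%nat ->
  t c i = Rmin c (X (t c) i / gg n a i).
Proof.
 intros H Hc Hi.
 pose proof (gg_pos _ _ _ _ _ _ H Hi) as Hg.
 pose proof (tle _ _ _ _ _ _ H Hc i Hi) as Hti.
 pose proof (xpos _ _ _ _ _ _ H Hc i Hi) as Hx.
 destruct (Rlt_dec (t c i) c) as [Hlt|Hge].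
 - pose proof (foc_a _ _ _ _ _ _ _ H Hc Hi Hlt).
   assert (0 < t c i) by nra.
   pose proof (foc_b _ _ _ _ _ _ _ H Hc Hi H1).
   assert (E : X (t c) i / gg n a i = t c i) by (field_simplify_eq; lra).
   rewrite E. rewrite Rmin_right; lra.
 - assert (t c i = c) by lra. rewrite H0.
   destruct (Req_dec c 0).
   + rewrite Rmin_left; auto. assert (0 < X (t c) i / gg n a i) by (apply Rdiv_lt_0_compat; lra). lra.
   + rewrite Rmin_left; auto. pose proof (foc_b _ _ _ _ _ _ _ H Hc Hi ltac:(lra)).
     rewrite H0 in H2. apply (Rmult_le_reg_r (gg n a i)); auto.
     replace (X (t c) i / gg n a i * gg n a i) with (X (t c) i) by (field; lra). lra.
Qed.

Lemma phi_mono a0 b0 g c c' u u' : 0 < a0 -> 0 < g -> c <= c' -> u <= u' ->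
  a0 * u + b0 + Rmin c (u / g) <= a0 * u' + b0 + Rmin c' (u' / g).
Proof. intros Ha Hg Hc Hu. assert (u / g <= u' / g) by (apply Rmult_le_compat_r; [left; apply Rinv_0_lt_compat|]; lra).
 assert (Rmin c (u/g) <= Rmin c' (u'/g)).
 { unfold Rmin. destruct (Rle_dec c (u/g)); destruct (Rle_dec c' (u'/g)); lra. }
 nra. Qed.

Lemma phi_shift a0 b0 g c c' u u' : 0 < a0 -> 0 < g -> c <= c' -> u' <= u ->
  a0 * u' + b0 + Rmin c' (u' / g) <= a0 * u + b0 + Rmin c (u / g) + (c' - c).
Proof. intros Ha Hg Hc Hu. assert (u' / g <= u / g) by (apply Rmult_le_compat_r; [left; apply Rinv_0_lt_compat|]; lra).
 assert (Rmin c' (u'/g) <= Rmin c (u/g) + (c' - c)).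
 { unfold Rmin. destruct (Rle_dec c (u/g)); destruct (Rle_dec c' (u'/g)); lra. }
 nra. Qed.

Lemma eqn n a b X t c i : Hyp n a b X t -> 0 <= c -> (i < n)%nat ->
  a i * X (t c) i + b i + Rmin c (X (t c) i / gg n a i) = Lc n a b X t c.
Proof. intros H Hc Hi. rewrite <- (foc _ _ _ _ _ _ _ H Hc Hi). rewrite <- (lev _ _ _ _ _ _ H Hc i Hi). unfold lat. ring. Qed.

Lemma sum1 n a b X t c : Hyp n a b X t -> 0 <= c -> sumN n (X (t c)) = 1.
Proof. intros H Hc. exact (proj2 (proj1 (xward _ _ _ _ _ _ H Hc))). Qed.

Lemma L_mono n a b X t c c' : Hyp n a b X t -> 0 <= c -> c <= c' -> Lc n a b X t c <= Lc n a b X t c'.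
Proof.
 intros H Hc Hcc. destruct (Rle_dec (Lc n a b X t c) (Lc n a b X t c')) as [|Hno]; auto. exfalso.
 assert (Hk : forall k, (k < n)%nat -> X (t c') k < X (t c) k).
 { intros k Hk. destruct (Rlt_dec (X (t c') k) (X (t c) k)) as [|Hn2]; auto. exfalso.
   pose proof H as H'. dH H'.
   pose proof (phi_mono (a k) (b k) (gg n a k) c c' (X (t c) k) (X (t c') k) (Ha k Hk) (gg_pos _ _ _ _ _ _ H Hk) Hcc ltac:(lra)) as P.
   rewrite (eqn _ _ _ _ _ _ _ H Hc Hk), (eqn _ _ _ _ _ _ _ H (Rle_trans _ _ _ Hc Hcc) Hk) in P. lra. }
 assert (sumN n (X (t c')) < sumN n (X (t c))).
 { apply (sumN_lt n _ _ 0%nat). intros; left; auto. pose proof H as H'; dH H'; lia. apply Hk. pose proof H as H'; dH H'; lia. }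
 rewrite (sum1 _ _ _ _ _ _ H Hc), (sum1 _ _ _ _ _ _ H (Rle_trans _ _ _ Hc Hcc)) in H0. lra.
Qed.

Lemma L_lip n a b X t c c' : Hyp n a b X t -> 0 <= c -> c <= c' -> Lc n a b X t c' <= Lc n a b X t c + (c' - c).
Proof.
 intros H Hc Hcc. destruct (Rle_dec (Lc n a b X t c') (Lc n a b X t c + (c' - c))) as [|Hno]; auto. exfalso.
 assert (Hk : forall k, (k < n)%nat -> X (t c) k < X (t c') k).
 { intros k Hk. destruct (Rlt_dec (X (t c) k) (X (t c') k)) as [|Hn2]; auto. exfalso.
   pose proof H as H'. dH H'.
   pose proof (phi_shift (a k) (b k) (gg n a k) c c' (X (t c) k) (X (t c') k) (Ha k Hk) (gg_pos _ _ _ _ _ _ H Hk) Hcc ltac:(lra)) as P.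
   rewrite (eqn _ _ _ _ _ _ _ H Hc Hk), (eqn _ _ _ _ _ _ _ H (Rle_trans _ _ _ Hc Hcc) Hk) in P. lra. }
 assert (sumN n (X (t c)) < sumN n (X (t c'))).
 { apply (sumN_lt n _ _ 0%nat). intros; left; auto. pose proof H as H'; dH H'; lia. apply Hk. pose proof H as H'; dH H'; lia. }
 rewrite (sum1 _ _ _ _ _ _ H Hc), (sum1 _ _ _ _ _ _ H (Rle_trans _ _ _ Hc Hcc)) in H0. lra.
Qed.

Definition Dd n a b X t i c := Lc n a b X t c - (1 + a i * gg n a i) * c - b i.

Lemma capped_iff n a b X t c i : Hyp n a b X t -> 0 <= c -> (i < n)%nat ->
  (t c i = c <-> 0 <= Dd n a b X t i c).
Proof.
 intros H Hc Hi. pose proof (foc _ _ _ _ _ _ _ H Hc Hi) as F. pose proof (eqn _ _ _ _ _ _ _ H Hc Hi) as E.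
 pose proof (gg_pos _ _ _ _ _ _ H Hi) as Hg. pose proof H as H'. dH H'. pose proof (Ha i Hi).
 unfold Dd. rewrite <- E. set (g := gg n a i) in *. set (x := X (t c) i) in *.
 assert (Ex : x = g * (x / g)) by (field; lra). set (u := x / g) in *. assert (Hag : 0 < a i * g) by (apply Rmult_lt_0_compat; lra).
 rewrite Ex. unfold Rmin in *. destruct (Rle_dec c u).
 - split; intros; auto. nra.
 - split; intros. lra. nra.
Qed.

Lemma uncapped n a b X t c i : Hyp n a b X t -> 0 <= c -> (i < n)%nat -> Dd n a b X t i c <= 0 ->
  t c i = X (t c) i / gg n a i.
Proof.
 intros H Hc Hi HD. pose proof (foc _ _ _ _ _ _ _ H Hc Hi) as F. pose proof (eqn _ _ _ _ _ _ _ H Hc Hi) as E.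
 pose proof (gg_pos _ _ _ _ _ _ H Hi) as Hg. pose proof H as H'. dH H'. pose proof (Ha i Hi).
 unfold Dd in HD. rewrite <- E in HD. rewrite F. set (g := gg n a i) in *. set (x := X (t c) i) in *.
 assert (Ex : x = g * (x / g)) by (field; lra). set (u := x / g) in *. assert (Hag : 0 < a i * g) by (apply Rmult_lt_0_compat; lra).
 rewrite Ex in HD. unfold Rmin in *. destruct (Rle_dec c u); auto. nra.
Qed.

Lemma D_lip n a b X t i c c' : Hyp n a b X t -> (i < n)%nat -> 0 <= c -> c <= c' ->
  - (1 + a i * gg n a i) * (c' - c) <= Dd n a b X t i c' - Dd n a b X t i c <= - (a i * gg n a i) * (c' - c).
Proof. intros H Hi Hc Hcc. pose proof (L_mono _ _ _ _ _ _ _ H Hc Hcc). pose proof (L_lip _ _ _ _ _ _ _ H Hc Hcc).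
 unfold Dd. split; nra. Qed.

Lemma D0 n a b X t i : Hyp n a b X t -> (i < n)%nat -> 0 < Dd n a b X t i 0.
Proof. intros H Hi. pose proof (eqn _ _ _ _ _ _ _ H (Rle_refl 0) Hi) as E.
 pose proof (xpos _ _ _ _ _ _ H (Rle_refl 0) i Hi). pose proof (gg_pos _ _ _ _ _ _ H Hi) as Hg.
 pose proof H as H'. dH H'. pose proof (Ha i Hi).
 assert (0 < X (t 0) i / gg n a i) by (apply Rdiv_lt_0_compat; lra).
 rewrite Rmin_left in E by lra. unfold Dd. rewrite <- E. nra. Qed.

Lemma lip_cont f K : 0 < K -> (forall x y, Rabs (f x - f y) <= K * Rabs (x - y)) -> continuity f.
Proof. intros HK Hl x0. unfold continuity_pt, continue_in, limit1_in, limit_in. intros eps He.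
 exists (eps / K). split. apply Rdiv_lt_0_compat; auto. intros x [_ Hx]. simpl in *. unfold R_dist in *.
 eapply Rle_lt_trans. apply Hl. apply (Rmult_lt_compat_l K) in Hx; auto.
 replace (K * (eps / K)) with eps in Hx by (field; lra). lra. Qed.

Ltac dabs := repeat match goal with |- context [Rcase_abs ?z] => destruct (Rcase_abs z) end.

Lemma Rmax0_lip x y : Rabs (Rmax 0 x - Rmax 0 y) <= Rabs (x - y).
Proof. unfold Rmax, Rabs. destruct (Rle_dec 0 x), (Rle_dec 0 y); dabs; lra. Qed.

Lemma thresh n a b X t i : Hyp n a b X t -> (i < n)%nat -> exists th, 0 < th /\
  forall c, 0 <= c -> (t c i = c <-> c <= th) /\ (th <= c -> t c i = X (t c) i / gg n a i).
Proof.
 intros H Hi. pose proof (gg_pos _ _ _ _ _ _ H Hi) as Hg. pose proof H as H'. dH H'. pose proof (Ha i Hi) as Hai.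
 assert (HK1 : 0 < a i * gg n a i) by (apply Rmult_lt_0_compat; lra).
 set (K1 := a i * gg n a i) in *.
 set (D := Dd n a b X t i).
 assert (HDl : forall c c', 0 <= c -> c <= c' -> - (1 + K1) * (c' - c) <= D c' - D c <= - K1 * (c' - c))
   by (intros; apply D_lip; auto).
 pose proof (D0 _ _ _ _ _ _ H Hi) as HD0. fold D in HD0.
 set (f := fun c => - D (Rmax 0 c)).
 assert (Hcont : continuity f).
 { apply (lip_cont f (1 + K1)). lra. intros x y. unfold f.
   pose proof (Rmax0_lip x y). pose proof (Rmax_l 0 x). pose proof (Rmax_l 0 y).
   set (p := Rmax 0 x) in *. set (q := Rmax 0 y) in *.
   assert (Rabs (- D p - - D q) <= (1 + K1) * Rabs (p - q)).
   { destruct (Rle_dec p q).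
     - pose proof (HDl p q ltac:(lra) ltac:(lra)). unfold Rabs. dabs; nra.
     - pose proof (HDl q p ltac:(lra) ltac:(lra)). unfold Rabs. dabs; nra. }
   assert ((1 + K1) * Rabs (p - q) <= (1 + K1) * Rabs (x - y)) by nra. lra. }
 set (y := D 0 / K1 + 1).
 assert (Hy : 0 < y) by (unfold y; assert (0 < D 0 / K1) by (apply Rdiv_lt_0_compat; lra); lra).
 assert (Hf0 : f 0 < 0). { unfold f. rewrite Rmax_left by lra. lra. }
 assert (Hfy : 0 < f y).
 { unfold f. rewrite Rmax_right by lra. pose proof (HDl 0 y ltac:(lra) ltac:(lra)).
   assert (K1 * y = D 0 + K1) by (unfold y; field; lra). nra. }
 destruct (IVT f 0 y Hcont Hy Hf0 Hfy) as [z [[Hz0 Hzy] Hfz]].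
 unfold f in Hfz. rewrite Rmax_right in Hfz by lra.
 assert (HDz : D z = 0) by lra.
 assert (Hzp : 0 < z). { destruct Hz0; auto. subst z. lra. }
 exists z. split; auto. intros c Hc.
 assert (Hle : c <= z -> 0 <= D c). { intros. pose proof (HDl c z Hc H0). nra. }
 assert (Hgt : z < c -> D c < 0). { intros. pose proof (HDl z c ltac:(lra) ltac:(lra)). nra. }
 split.
 - rewrite (capped_iff _ _ _ _ _ _ _ H Hc Hi). fold D. split; intros.
   destruct (Rle_dec c z); auto. specialize (Hgt ltac:(lra)). lra. auto.
 - intros. apply (uncapped n a b X t c i H Hc Hi). fold D. destruct H0. specialize (Hgt H0). lra. subst; lra.
Qed.

Lemma fin_choice (n : nat) (P : nat -> R -> Prop) : (forall i, (i < n)%nat -> exists v, P i v) ->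
  exists f : nat -> R, forall i, (i < n)%nat -> P i (f i).
Proof. induction n; intros H.
 - exists (fun _ => 0). intros; lia.
 - destruct IHn as [f Hf]. intros; apply H; lia.
   destruct (H n ltac:(lia)) as [v Hv].
   exists (fun k => if Nat.eqb k n then v else f k). intros i Hi.
   destruct (Nat.eqb_spec i n). subst; auto. apply Hf; lia. Qed.

Definition mm n a (B : nat -> bool) i := if B i then a i else a i + 1 / gg n a i.
Definition dd (B : nat -> bool) i := if B i then 1 else 0.
Definition Mt n a B := sumN n (fun k => 1 / mm n a B k).
Definition Bt n a b B := sumN n (fun k => b k / mm n a B k).
Definition Dt n a B := sumN n (fun k => dd B k / mm n a B k).
Definition uu n a b B i := ((1 + Bt n a b B) / Mt n a B - b i) / mm n a B i.
Definition vv n a B i := (Dt n a B / Mt n a B - dd B i) / mm n a B i.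

Lemma mm_pos n a b X t B i : Hyp n a b X t -> (i < n)%nat -> 0 < mm n a B i.
Proof. intros H Hi. pose proof (gg_pos _ _ _ _ _ _ H Hi). dH H. pose proof (Ha i Hi). unfold mm.
 destruct (B i); auto. assert (0 < 1 / gg n a i) by (apply Rdiv_lt_0_compat; lra). lra. Qed.

Lemma affine_piece n a b X t (B : nat -> bool) c : Hyp n a b X t -> 0 <= c ->
  (forall i, (i < n)%nat -> t c i = if B i then c else X (t c) i / gg n a i) ->
  forall i, (i < n)%nat -> X (t c) i = uu n a b B i + vv n a B i * c.
Proof.
 intros H Hc HB.
 set (L := Lc n a b X t c).
 assert (Hx : forall i, (i < n)%nat -> X (t c) i = (L - b i - dd B i * c) / mm n a B i).
 { intros i Hi. pose proof (lev _ _ _ _ _ _ H Hc i Hi) as E. fold L in E. rewrite (HB i Hi) in E.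
   pose proof (mm_pos _ _ _ _ _ B _ H Hi). pose proof (gg_pos _ _ _ _ _ _ H Hi).
   unfold lat, mm, dd in *. destruct (B i).
   - rewrite <- E. field. lra.
   - rewrite <- E. set (g := gg n a i) in *.
     replace (a i * X (t c) i + b i + X (t c) i / g - b i - 0 * c) with (X (t c) i * (a i + 1 / g)) by (field; lra).
     set (m := a i + 1 / g) in *. field. lra. }
 assert (HM : 0 < Mt n a B).
 { unfold Mt. apply sumN_pos. pose proof H as H'; dH H'; lia. intros k Hk. apply Rdiv_lt_0_compat. lra. apply (mm_pos _ _ _ _ _ B _ H Hk). }
 assert (HL : L = (1 + Bt n a b B + c * Dt n a B) / Mt n a B).
 { pose proof (sum1 _ _ _ _ _ _ H Hc) as S1.
   rewrite (sumN_ext n _ (fun k => L * (1 / mm n a B k) + (-1) * (b k / mm n a B k) + (- c) * (dd B k / mm n a B k))) in S1.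
   2:{ intros k Hk. rewrite (Hx k Hk). pose proof (mm_pos _ _ _ _ _ B _ H Hk). field. lra. }
   rewrite !sumN_plus, !sumN_scal in S1. fold (Mt n a B) (Bt n a b B) (Dt n a B) in S1.
   field_simplify_eq; lra. }
 intros i Hi. rewrite (Hx i Hi), HL. unfold uu, vv. pose proof (mm_pos _ _ _ _ _ B _ H Hi). field. lra.
Qed.

Lemma cost_quad n a b (x : nat -> R) (u v : nat -> R) c :
  (forall i, (i < n)%nat -> x i = u i + v i * c) ->
  cost n a b x = sumN n (fun k => (a k * u k + b k) * u k)
     + sumN n (fun k => a k * u k * v k + (a k * u k + b k) * v k) * c
     + sumN n (fun k => a k * v k * v k) * c ^ 2.
Proof. intros Hx. unfold cost, lat.
 set (P := sumN n (fun k => (a k * u k + b k) * u k)).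
 set (Q := sumN n (fun k => a k * u k * v k + (a k * u k + b k) * v k)).
 set (R0 := sumN n (fun k => a k * v k * v k)).
 rewrite (sumN_ext n _ (fun k => (a k * u k + b k) * u k + c * (a k * u k * v k + (a k * u k + b k) * v k) + c ^ 2 * (a k * v k * v k))).
 2:{ intros k Hk. rewrite (Hx k Hk). ring. }
 rewrite !sumN_plus, !sumN_scal. unfold P, Q, R0. ring. Qed.

Lemma vv_false n a i : vv n a (fun _ => false) i = 0.
Proof. unfold vv, Dt, dd. rewrite (sumN_ext n (fun k => 0 / mm n a (fun _ => false) k) (fun _ => 0)).
 rewrite sumN_zero. unfold Rdiv; ring.
 intros; unfold Rdiv; ring. Qed.

Lemma vv_true n a b X t i : Hyp n a b X t -> vv n a (fun _ => true) i = 0.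
Proof. intros H. unfold vv. change (Dt n a (fun _ => true)) with (Mt n a (fun _ => true)).
 assert (0 < Mt n a (fun _ => true)).
 { apply sumN_pos. pose proof H as H'; dH H'; lia. intros k Hk. apply Rdiv_lt_0_compat. lra. apply (mm_pos _ _ _ _ _ _ _ H Hk). }
 unfold dd. replace (Mt n a (fun _ => true) / Mt n a (fun _ => true)) with 1 by (field; lra).
 unfold Rdiv; ring. Qed.

Lemma list_max (l : list R) : l <> nil -> exists M, In M l /\ forall x, In x l -> x <= M.
Proof. induction l as [|y l IH]; intros Hne; [congruence|].
 destruct l as [|z l'].
 - exists y. split. left; auto. intros x [Hx|[]]. subst; lra.
 - destruct IH as [M [HM HMx]]. congruence.
   exists (Rmax y M). split.
   + unfold Rmax. destruct (Rle_dec y M). right; auto. left; auto.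
   + intros x [Hx|Hx]. subst. apply Rmax_l. eapply Rle_trans. apply HMx; auto. apply Rmax_r. Qed.

Lemma filter_len_lt (f : R -> bool) (l : list R) M : In M l -> f M = false -> (length (filter f l) < length l)%nat.
Proof. induction l as [|y l IH]; simpl; intros Hin Hf; [contradiction|].
 assert (forall l0, (length (filter f l0) <= length l0)%nat).
 { induction l0; simpl; auto. destruct (f a); simpl; lia. }
 destruct Hin as [E|Hin].
 - subst. rewrite Hf. specialize (H l). lia.
 - specialize (IH Hin Hf). destruct (f y); simpl; lia. Qed.

Lemma sortd_aux N : forall (l : list R), (length l <= N)%nat -> l <> nil -> exists (j : nat) (cs : nat -> R),
  (1 <= j <= length l)%nat /\ (forall k, (1 <= k < j)%nat -> cs (S k) < cs k) /\
  (forall x, In x l -> exists k, (1 <= k <= j)%nat /\ x = cs k) /\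
  (forall k, (1 <= k <= j)%nat -> In (cs k) l).
Proof.
 induction N; intros l Hl Hne.
 - destruct l; simpl in Hl; [congruence| lia].
 - destruct (list_max l Hne) as [M [HM HMx]].
   set (f := fun x => if Req_EM_T x M then false else true).
   set (l' := filter f l).
   assert (HfM : f M = false) by (unfold f; destruct (Req_EM_T M M); congruence).
   pose proof (filter_len_lt f l M HM HfM) as Hlen. fold l' in Hlen.
   assert (Hin' : forall x, In x l' <-> In x l /\ x <> M).
   { intros x. unfold l'. rewrite filter_In. unfold f. destruct (Req_EM_T x M); split; intros [? ?]; auto; try congruence; split; auto. }
   destruct l' as [|z l''] eqn:El'.
   + exists 1%nat, (fun _ => M). assert (length l >= 1)%nat by (destruct l; [congruence| simpl; lia]).
     split; [lia|]. split; [intros; lia|]. split.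
     * intros x Hx. exists 1%nat. split; [lia|]. destruct (Req_EM_T x M); auto. exfalso. apply (proj2 (Hin' x)). auto.
     * intros; auto.
   + rewrite <- El' in *. destruct (IHN l') as [j' [cs' [Hj' [Hd' [Hc' Hm']]]]]. lia. rewrite El'; congruence.
     exists (S j'), (fun k => if Nat.leb k 1 then M else cs' (pred k)).
     assert (Hlt : forall k, (1 <= k <= j')%nat -> cs' k < M).
     { intros k Hk. pose proof (Hm' k Hk) as Hi. apply Hin' in Hi. destruct Hi as [Hi Hne']. pose proof (HMx _ Hi) as Hle. destruct Hle; auto; congruence. }
     split; [lia|]. split; [|split].
     * intros k Hk. destruct (Nat.leb_spec k 1).
       -- assert (k = 1%nat) by lia. subst. simpl. apply Hlt. lia.
       -- destruct (Nat.leb_spec (S k) 1); [lia|]. destruct k as [|k]; [lia|]. simpl. apply Hd'. lia.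
     * intros x Hx. destruct (Req_EM_T x M).
       -- exists 1%nat. split; [lia|]. simpl. auto.
       -- destruct (Hc' x) as [k [Hk Ex]]. apply Hin'; auto. exists (S k). split; [lia|].
          destruct (Nat.leb_spec (S k) 1); [lia|]. simpl. auto.
     * intros k Hk. destruct (Nat.leb_spec k 1); auto. apply Hin'. apply Hm'. lia.
Qed.

Lemma cs_mono (j : nat) (cs : nat -> R) : (forall k, (1 <= k < j)%nat -> cs (S k) < cs k) ->
  forall k m, (1 <= k)%nat -> (k <= m)%nat -> (m <= j)%nat -> cs m <= cs k.
Proof. intros Hd k m Hk Hkm. induction Hkm; intros Hm. lra. specialize (IHHkm ltac:(lia)). specialize (Hd m ltac:(lia)). lra. Qed.

Lemma quad_min p q r lo hi : lo <= hi -> exists m, lo <= m <= hi /\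
  forall c, lo <= c <= hi -> p + q * m + r * m ^ 2 <= p + q * c + r * c ^ 2.
Proof. intros Hlh.
 destruct (continuity_ab_min (fun c => p + q * c + r * c ^ 2) lo hi Hlh) as [m [Hm Hb]].
 - intros c _. reg.
 - exists m. split; auto. Qed.

Lemma min_assembly (F : R -> R) (j : nat) (cs : nat -> R) :
  (1 <= j)%nat -> (forall k, (1 <= k < j)%nat -> cs (S k) < cs k) -> 0 < cs j ->
  (forall c c', cs 1%nat <= c -> cs 1%nat <= c' -> F c = F c') ->
  (forall k, (1 <= k < j)%nat -> exists p q r, forall c, cs (S k) <= c <= cs k -> F c = p + q * c + r * c ^ 2) ->
  (exists p q r, forall c, 0 <= c <= cs j -> F c = p + q * c + r * c ^ 2) ->
  exists cstar, 0 <= cstar /\ forall c, 0 <= c -> F cstar <= F c.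
Proof.
 intros Hj Hd Hcj H1 H2 H3.
 assert (Q : forall k, (1 <= k <= j)%nat -> exists cst, 0 <= cst /\ forall c, cs k <= c -> F cst <= F c).
 { induction k as [|k IH]; intros Hk; [lia|].
   destruct (Nat.eq_dec k 0).
   - subst. exists (cs 1%nat). split. pose proof (cs_mono j cs Hd 1 j ltac:(lia) ltac:(lia) ltac:(lia)). lra.
     intros c Hc. rewrite (H1 (cs 1%nat) c); lra.
   - destruct (IH ltac:(lia)) as [c1 [Hc1 Hc1m]].
     destruct (H2 k ltac:(lia)) as [p [q [r Hpqr]]].
     pose proof (Hd k ltac:(lia)).
     destruct (quad_min p q r (cs (S k)) (cs k) ltac:(lra)) as [m [Hm Hmm]].
     pose proof (cs_mono j cs Hd (S k) j ltac:(lia) ltac:(lia) ltac:(lia)).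
     destruct (Rle_dec (F m) (F c1)).
     + exists m. split. lra. intros c Hc. destruct (Rle_dec (cs k) c).
       * specialize (Hc1m c r1). lra.
       * rewrite (Hpqr m Hm), (Hpqr c ltac:(lra)). apply Hmm. lra.
     + exists c1. split; auto. intros c Hc. destruct (Rle_dec (cs k) c).
       * auto.
       * assert (F m <= F c). { rewrite (Hpqr m Hm), (Hpqr c ltac:(lra)). apply Hmm. lra. } lra. }
 destruct (Q j ltac:(lia)) as [c1 [Hc1 Hc1m]].
 destruct H3 as [p [q [r Hpqr]]].
 destruct (quad_min p q r 0 (cs j) ltac:(lra)) as [m [Hm Hmm]].
 destruct (Rle_dec (F m) (F c1)).
 - exists m. split. lra. intros c Hc. destruct (Rle_dec (cs j) c).
   + specialize (Hc1m c r1). lra.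
   + rewrite (Hpqr m Hm), (Hpqr c ltac:(lra)). apply Hmm. lra.
 - exists c1. split; auto. intros c Hc. destruct (Rle_dec (cs j) c). auto.
   assert (F m <= F c). { rewrite (Hpqr m Hm), (Hpqr c ltac:(lra)). apply Hmm. lra. } lra.
Qed.
Theorem mainTheorem7
  (n : nat) (a b : nat -> R)
  (X : (nat -> R) -> (nat -> R)) (t : R -> (nat -> R))
  (Hn : (2 <= n)%nat)
  (Ha : forall i, (i < n)%nat -> 0 < a i)
  (Hb : forall i, (i < n)%nat -> 0 <= b i)
  (HX : is_eq_map n a b X)
  (HX0 : forall i, (i < n)%nat -> 0 < X (fun _ => 0) i)
  (Ht : forall c, 0 <= c ->
          forall s, inT n X c s <-> (forall i, (i < n)%nat -> s i = t c i)) :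
  exists (j : nat) (cs : nat -> R) (A : nat -> nat -> Prop),
    (1 <= j <= n)%nat /\
    (forall k, (1 <= k < j)%nat -> cs (S k) < cs k) /\
    0 < cs j /\
    (forall i, (i < n)%nat -> ~ A O i) /\
    (forall k, (k < j)%nat ->
       (forall i, (i < n)%nat -> A k i -> A (S k) i) /\
       (exists i, (i < n)%nat /\ A (S k) i /\ ~ A k i)) /\
    (forall i, (i < n)%nat -> A j i) /\
    (* A(c) = A_k on (c_{k+1}, c_k] ∩ R_+, with c_0 = infinity *)
    (forall k, (k < j)%nat -> forall c, 0 <= c -> cs (S k) < c ->
       (k = O \/ c <= cs k) ->
       forall i, (i < n)%nat -> (t c i = c <-> A k i)) /\
    (* A(c) = N on [0, c_j] *)
    (forall c, 0 <= c <= cs j -> forall i, (i < n)%nat -> t c i = c) /\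
    (* on [c_1, infinity): x affine, C(x) polynomial of degree <= 2 *)
    (exists u v : nat -> R, forall c, cs 1%nat <= c ->
       forall i, (i < n)%nat -> X (t c) i = u i + v i * c) /\
    (exists p q r : R, forall c, cs 1%nat <= c ->
       cost n a b (X (t c)) = p + q * c + r * c ^ 2) /\
    (* on [c_{k+1}, c_k], k = 1..j-1 *)
    (forall k, (1 <= k < j)%nat ->
       (exists u v : nat -> R, forall c, cs (S k) <= c <= cs k ->
          forall i, (i < n)%nat -> X (t c) i = u i + v i * c) /\
       (exists p q r : R, forall c, cs (S k) <= c <= cs k ->
          cost n a b (X (t c)) = p + q * c + r * c ^ 2)) /\
    (* on [0, c_j] *)
    (exists u v : nat -> R, forall c, 0 <= c <= cs j ->
       forall i, (i < n)%nat -> X (t c) i = u i + v i * c) /\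
    (exists p q r : R, forall c, 0 <= c <= cs j ->
       cost n a b (X (t c)) = p + q * c + r * c ^ 2) /\
    (* x(c) constant on [c_1, infinity) *)
    (forall c c', cs 1%nat <= c -> cs 1%nat <= c' ->
       forall i, (i < n)%nat -> X (t c) i = X (t c') i) /\
    (* x(c) = x(0) on [0, c_j] *)
    (forall c, 0 <= c <= cs j ->
       forall i, (i < n)%nat -> X (t c) i = X (fun _ => 0) i) /\
    (* the minimum of C(x(c)) over R_+ is attained *)
    (exists cstar, 0 <= cstar /\
       forall c, 0 <= c -> cost n a b (X (t cstar)) <= cost n a b (X (t c))).
Proof.
 assert (H : Hyp n a b X t) by exact (conj Hn (conj Ha (conj Hb (conj HX (conj HX0 Ht))))).
 destruct (fin_choice n (fun i th => 0 < th /\ forall c, 0 <= c -> (t c i = c <-> c <= th) /\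
     (th <= c -> t c i = X (t c) i / gg n a i))) as [th Hth].
 { intros i Hi. apply (thresh n a b X t i H Hi). }
 set (l := map th (seq 0 n)).
 assert (Hinl : forall x, In x l <-> exists i, (i < n)%nat /\ x = th i).
 { intros x; unfold l; rewrite in_map_iff; split.
   - intros [i [E Hi]]. apply in_seq in Hi. exists i; split; [lia|auto].
   - intros [i [Hi E]]. exists i; split; auto. apply in_seq; lia. }
 assert (Hlen : length l = n) by (unfold l; rewrite length_map, length_seq; auto).
 destruct (sortd_aux (length l) l (le_n _)) as [j [cs [Hj [Hd [Hcov Hmem]]]]].
 { unfold l; destruct n; [lia|]; simpl; congruence. }
 rewrite Hlen in Hj.
 assert (Hth_cs : forall i, (i < n)%nat -> exists m, (1 <= m <= j)%nat /\ th i = cs m).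
 { intros i Hi. apply Hcov. apply Hinl. exists i; auto. }
 assert (Hcs_th : forall k, (1 <= k <= j)%nat -> exists i, (i < n)%nat /\ cs k = th i).
 { intros k Hk. apply Hinl. apply Hmem; auto. }
 assert (Hcsj : 0 < cs j).
 { destruct (Hcs_th j ltac:(lia)) as [i [Hi E]]. rewrite E. apply (Hth i Hi). }
 pose proof (cs_mono j cs Hd) as Hmono.
 assert (Hcs1 : cs j <= cs 1%nat) by (apply Hmono; lia).
 assert (Hcap : forall c i, 0 <= c -> (i < n)%nat -> (t c i = c <-> c <= th i)).
 { intros c i Hc Hi. apply (proj2 (Hth i Hi) c Hc). }
 assert (Hunc : forall c i, 0 <= c -> (i < n)%nat -> th i <= c -> t c i = X (t c) i / gg n a i).
 { intros c i Hc Hi. apply (proj2 (Hth i Hi) c Hc). }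
 assert (P_top : forall c, cs 1%nat <= c -> forall i, (i < n)%nat ->
    X (t c) i = uu n a b (fun _ => false) i + vv n a (fun _ => false) i * c).
 { intros c Hc. apply (affine_piece n a b X t (fun _ => false) c H ltac:(lra)).
   intros i Hi. apply Hunc; auto; [lra|]. destruct (Hth_cs i Hi) as [m [Hm E]]. rewrite E.
   pose proof (Hmono 1%nat m ltac:(lia) ltac:(lia) ltac:(lia)). lra. }
 assert (P_bot : forall c, 0 <= c <= cs j -> forall i, (i < n)%nat ->
    X (t c) i = uu n a b (fun _ => true) i + vv n a (fun _ => true) i * c).
 { intros c Hc. apply (affine_piece n a b X t (fun _ => true) c H ltac:(lra)).
   intros i Hi. apply Hcap; auto; [lra|]. destruct (Hth_cs i Hi) as [m [Hm E]]. rewrite E.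
   pose proof (Hmono m j ltac:(lia) ltac:(lia) ltac:(lia)). lra. }
 set (Bk := fun k i => if Rle_dec (cs k) (th i) then true else false).
 assert (P_mid : forall k, (1 <= k < j)%nat -> forall c, cs (S k) <= c <= cs k -> forall i, (i < n)%nat ->
    X (t c) i = uu n a b (Bk k) i + vv n a (Bk k) i * c).
 { intros k Hk c Hc. pose proof (Hmono (S k) j ltac:(lia) ltac:(lia) ltac:(lia)).
   apply (affine_piece n a b X t (Bk k) c H ltac:(lra)).
   intros i Hi. unfold Bk. destruct (Rle_dec (cs k) (th i)).
   - apply Hcap; auto; lra.
   - apply Hunc; auto; [lra|]. destruct (Hth_cs i Hi) as [m [Hm E]]. rewrite E in *.
     destruct (Compare_dec.le_lt_dec m k).
     + pose proof (Hmono m k ltac:(lia) ltac:(lia) ltac:(lia)). lra.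
     + pose proof (Hmono (S k) m ltac:(lia) ltac:(lia) ltac:(lia)). lra. }
 assert (Hcost_ext : forall x y, (forall i, (i < n)%nat -> x i = y i) -> cost n a b x = cost n a b y).
 { intros x y Hxy. unfold cost. apply sumN_ext. intros k Hk. rewrite Hxy; auto. }
 assert (Const : forall c c', cs 1%nat <= c -> cs 1%nat <= c' -> forall i, (i < n)%nat -> X (t c) i = X (t c') i).
 { intros c c' Hc Hc' i Hi. rewrite (P_top c Hc i Hi), (P_top c' Hc' i Hi), !vv_false. ring. }
 assert (Bot0 : forall c, 0 <= c <= cs j -> forall i, (i < n)%nat -> X (t c) i = X (fun _ => 0) i).
 { intros c Hc i Hi. rewrite <- (X_t0 n a b X t H i Hi).
   rewrite (P_bot c Hc i Hi), (P_bot 0 ltac:(lra) i Hi), !(vv_true n a b X t i H). ring. }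
 exists j, cs, (fun k i => match k with O => False | S _ => cs k <= th i end).
 split; [lia|]. split; [auto|]. split; [auto|]. split; [intros; simpl; tauto|]. split.
 { intros k Hk. split.
   - intros i Hi HA. destruct k as [|k']; [contradiction|]. simpl in *. pose proof (Hd (S k') ltac:(lia)). lra.
   - destruct (Hcs_th (S k) ltac:(lia)) as [i [Hi E]]. exists i. split; auto. split.
     + simpl. lra.
     + destruct k as [|k']; [simpl; tauto|]. simpl. pose proof (Hd (S k') ltac:(lia)). lra. }
 split.
 { intros i Hi. destruct (Hth_cs i Hi) as [m [Hm E]]. destruct j as [|j']; [lia|]. simpl.
   pose proof (Hmono m (S j') ltac:(lia) ltac:(lia) ltac:(lia)). lra. }
 split.
 { intros k Hk c Hc Hlt Hor i Hi. rewrite Hcap by auto. destruct (Hth_cs i Hi) as [m [Hm E]]. rewrite E.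
   destruct k as [|k'].
   - split; [|tauto]. intros Hcm. pose proof (Hmono 1%nat m ltac:(lia) ltac:(lia) ltac:(lia)). lra.
   - split.
     + intros Hcm. destruct (Compare_dec.le_lt_dec m (S k')).
       * apply Hmono; lia.
       * pose proof (Hmono (S (S k')) m ltac:(lia) ltac:(lia) ltac:(lia)). lra.
     + intros HA. destruct Hor as [Hor|Hor]; [discriminate|]. lra. }
 split.
 { intros c Hc i Hi. apply Hcap; auto; [lra|]. destruct (Hth_cs i Hi) as [m [Hm E]]. rewrite E.
   pose proof (Hmono m j ltac:(lia) ltac:(lia) ltac:(lia)). lra. }
 split.
 { exists (uu n a b (fun _ => false)), (vv n a (fun _ => false)). auto. }
 split.
 { eexists; eexists; eexists. intros c Hc. apply cost_quad. apply P_top; auto. }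
 split.
 { intros k Hk. split.
   - exists (uu n a b (Bk k)), (vv n a (Bk k)). intros c Hc. apply (P_mid k Hk c Hc).
   - eexists; eexists; eexists. intros c Hc. apply cost_quad. apply (P_mid k Hk c Hc). }
 split.
 { exists (uu n a b (fun _ => true)), (vv n a (fun _ => true)). auto. }
 split.
 { eexists; eexists; eexists. intros c Hc. apply cost_quad. apply P_bot; auto. }
 split; [auto|]. split; [auto|].
 apply (min_assembly (fun c => cost n a b (X (t c))) j cs ltac:(lia) Hd Hcsj).
 - intros c c' Hc Hc'. apply Hcost_ext. apply Const; auto.
 - intros k Hk. eexists; eexists; eexists. intros c Hc. apply cost_quad. apply (P_mid k Hk c Hc).
 - eexists; eexists; eexists. intros c Hc. apply cost_quad. apply P_bot; auto.
Qed.
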